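(* Let $A\in\mathbb{R}^{n\times n}$, let $\lambda\in\mathbb{R}$, and let $v\in\mathbb{R}^{n\times1}$ and $u\in\mathbb{R}^{1\times n}$ satisfy $Av=\lambda v$, $uA=\lambda u$ and $uv=1$. Then for every row vector $u'\in\mathbb{R}^{1\times n}$ with $u'v=1$ there exists a matrix $Z$ conjugate (similar) to $A$ such that (i) $u'Z=\lambda u'$; (ii) $Zv=\lambda v$; and (iii) for every row vector $w$ and every scalar $\mu\neq\lambda$ with $wA=\mu w$, one has $wZ=\mu w$. *)

(* Defs.v *)
From HB Require Import structures.
From mathcomp Require Import all_boot all_order all_algebra.
Set Implicit Arguments. Unset Strict Implicit. Unset Printing Implicit Defensive.
Import Order.TTheory GRing.Theory Num.Theory.
Local Open Scope ring_scope.

Definition similar_mx (R : comUnitRingType) (n : nat) (A Z : 'M[R]_n) : Prop :=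
  exists2 P : 'M[R]_n, P \in unitmx & Z = invmx P *m A *m P.

(* Main.v *)
Require Import Defs.
From HB Require Import structures.
From mathcomp Require Import all_boot all_order all_algebra.
Import Order.TTheory GRing.Theory Num.Theory.
Local Open Scope ring_scope.

Theorem lemma4p2 (R : realFieldType) (n : nat) (A : 'M[R]_n) (lambda : R)
  (v : 'cV[R]_n) (u : 'rV[R]_n)
  (hAv : A *m v = lambda *: v) (huA : u *m A = lambda *: u)
  (huv : u *m v = 1%:M) :
  forall u' : 'rV[R]_n, u' *m v = 1%:M ->
    exists Z : 'M[R]_n,
      [/\ similar_mx A Z,
          u' *m Z = lambda *: u',
          Z *m v = lambda *: v &
          forall (w : 'rV[R]_n) (mu : R), mu != lambda ->
            w *m A = mu *: w -> w *m Z = mu *: w].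
Proof.
move=> u' hu'v.
set d := u' - u.
have hdv : d *m v = 0 by rewrite /d mulmxBl hu'v huv subrr.
set P : 'M[R]_n := 1%:M + v *m d.
set Q : 'M[R]_n := 1%:M - v *m d.
have hPQ : P *m Q = 1%:M.
  rewrite /P /Q mulmxDl mul1mx (mulmxBr (v *m d)) mulmx1.
  have -> : v *m d *m (v *m d) = 0 by rewrite mulmxA -(mulmxA v d v) hdv mulmx0 mul0mx.
  by rewrite subr0 subrK.
have [Pu _] := mulmx1_unit hPQ.
have hinv : invmx P = Q.
  by rewrite -[invmx P]mulmx1 -hPQ mulmxA mulVmx // mul1mx.
have hPv : P *m v = v by rewrite /P mulmxDl mul1mx -mulmxA hdv mulmx0 addr0.
have hQv : Q *m v = v by rewrite /Q mulmxBl mul1mx -mulmxA hdv mulmx0 subr0.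
have huP : u *m P = u' by rewrite /P mulmxDr mulmx1 mulmxA huv mul1mx /d addrC subrK.
exists (Q *m A *m P); split.
- by exists P => //; rewrite hinv.
- rewrite -huP !mulmxA -(mulmxA u P Q) hPQ mulmx1 huA.
  by rewrite -scalemxAl.
- by rewrite -mulmxA hPv -mulmxA hAv -scalemxAr hQv.
- move=> w mu hmu hwA.
  have hwv : w *m v = 0.
    have : (mu - lambda) *: (w *m v) = 0.
      by rewrite scalerBl scalemxAl -hwA -mulmxA hAv scalemxAr subrr.
    move/eqP; rewrite scaler_eq0 subr_eq0 (negbTE hmu) /=.
    by move/eqP.
  have hwQ : w *m Q = w by rewrite /Q mulmxBr mulmx1 mulmxA hwv mul0mx subr0.
  have hwP : w *m P = w by rewrite /P mulmxDr mulmx1 mulmxA hwv mul0mx addr0.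
  by rewrite !mulmxA hwQ hwA -scalemxAl hwP.
Qed.
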